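(* Let $R$ be a commutative ring with unit, let $G=(V,E)$ be a finite digraph and $f:V\to[0,+\infty)$ a discrete Morse function on $G$ such that every vertex $v$ with $f(v)=0$ has out-degree $1$ and in-degree $1$. Let $\tilde G$ be the $\mathcal M$-collapse of $(G,f)$. Then the inclusion $i:\tilde G\to G$ induces isomorphisms $H_n(\tilde G;R)\xrightarrow{\cong}H_n(G;R)$ of path homology groups for all $n\ge0$.
   Context: A digraph $G=(V,E)$ consists of a set $V$ and $E\subseteq (V\times V)\setminus\{(v,v)\}$; $(u,v)\in E$ is written $u\to v$. The out-degree (in-degree) of $v$ is the number of edges starting (ending) at $v$. An allowed elementary $n$-path is a sequence $v_0\cdots v_n$ of vertices with $v_{i-1}\to v_i\in E$ for all $1\le i\le n$. For $n\ge0$, $\Lambda_n(V)$ is the free $R$-module on sequences $v_0\cdots v_n$ with $v_{i-1}\ne v_i$, with $\partial_n=\sum_{i=0}^n(-1)^id_i$, $d_i$ deleting $v_i$ and sequences with two equal consecutive entries taken to be $0$. $P_n(G)$ is the span of allowed elementary $n$-paths, $\Omega_n(G)=\{x\in P_n(G):\partial_nx\in P_{n-1}(G)\}$, and the path homology $H_n(G;R)$ is the homology of $(\Omega_*(G),\partial_* )$. For a subdigraph $\tilde G\subseteq G$, the inclusion induces the inclusion of chain complexes $\Omega_*(\tilde G)\subseteq\Omega_*(G)$ and hence maps on path homology. A map $f:V\to[0,+\infty)$ is a discrete Morse function on $G$ if for every allowed elementary path $v_0\cdots v_n$: (i) there is at most one index $i$ with $f(v_i)=0$ such that $v_0\cdots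 v_{i-1}v_{i+1}\cdots v_n$ is an allowed elementary path; (ii) there is at most one vertex $u$ with $f(u)=0$ such that for some $-1\le j\le n$, $v_0\cdots v_juv_{j+1}\cdots v_n$ (meaning $uv_0\cdots v_n$ if $j=-1$, $v_0\cdots v_nu$ if $j=n$) is an allowed elementary path. $\mathcal M$-collapse: under the degree hypothesis, each vertex $v$ with $f(v)=0$ has a unique in-neighbour $u$ and out-neighbour $w$ ($u\to v\to w$, with $u,v,w$ distinct). Let $Z$ be the set of zeros $v$ of $f$ for which $u\to w$ is also an edge of $G$. The $\mathcal M$-collapse $\tilde G$ has vertex set $V\setminus Z$ and edge set $E\setminus\{u\to v,\ v\to w: v\in Z\}$ (obtained by successively substituting each such $u\to v\to w$ by $u\to w$), and $\tilde f=f|_{V\setminus Z}$. *)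

(* Defs.v *)
From HB Require Import structures.
From mathcomp Require Import all_boot all_order all_algebra.
From mathcomp Require Import reals.
Set Implicit Arguments. Unset Strict Implicit. Unset Printing Implicit Defensive.
Import Order.TTheory GRing.Theory Num.Theory.
Local Open Scope ring_scope.

Section PathHomology.
Variables (R : comPzRingType) (V : finType).

(* Sequences with no two equal consecutive entries (basis of Lambda_n). *)
Definition regular (s : seq V) : bool := sorted (fun a b => a != b) s.

Definition allowed (Vs : pred V) (E : rel V) (s : seq V) : bool :=
  [&& (0 < size s)%N, all Vs s & sorted E s].

Definition delete_at (i : nat) (s : seq V) : seq V := take i s ++ drop i.+1 s.
(* insert u so that it becomes the k-th entry (k = j+1, -1 <= j <= n) *)
Definition insert_at (k : nat) (u : V) (s : seq V) : seq V :=
  take k s ++ u :: drop k s.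

Definition chain (n : nat) := {ffun n.+1.-tuple V -> R}.

Definition inLambda n (c : chain n) : Prop := forall t, c t != 0 -> regular t.

Definition inP (Vs : pred V) (E : rel V) n (c : chain n) : Prop :=
  forall t, c t != 0 -> allowed Vs E t.

(* boundary  d_{n+1} = sum_i (-1)^i d_i on Lambda_{n+1}, sequences with two
   equal consecutive entries being taken to be 0 *)
Definition bd n (c : chain n.+1) : chain n :=
  [ffun w : n.+1.-tuple V =>
     if regular w then
       \sum_(t : n.+2.-tuple V | regular t) \sum_(i < n.+2)
          ((-1) ^+ i * c t) *+ (delete_at i t == w)
     else 0].

Definition bdn n : chain n -> chain n.-1 :=
  match n return chain n -> chain n.-1 with
  | 0 => fun _ => 0
  | n'.+1 => fun c => bd c
  end.

Definition inOmega (Vs : pred V) (E : rel V) n (c : chain n) : Prop :=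
  inP Vs E c /\ inP Vs E (bdn c).

(* For a subdigraph (Vs', E') of (Vs, E): the map H_n(G') -> H_n(G) induced by
   the inclusion Omega_*(G') ⊆ Omega_*(G) is bijective (hence an R-module
   isomorphism, being R-linear). Written out: surjective and injective on
   homology classes. *)
Definition inclusion_iso_Hn (Vs' : pred V) (E' : rel V)
    (Vs : pred V) (E : rel V) (n : nat) : Prop :=
  (forall z : chain n, inOmega Vs E z -> bdn z = 0 ->
     exists (z' : chain n) (w : chain n.+1),
       [/\ inOmega Vs' E' z', bdn z' = 0, inOmega Vs E w & z = z' + bd w])
  /\
  (forall (z' : chain n) (w : chain n.+1),
     inOmega Vs' E' z' -> bdn z' = 0 -> inOmega Vs E w -> z' = bd w ->
     exists w' : chain n.+1, inOmega Vs' E' w' /\ z' = bd w').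

End PathHomology.

Section Morse.
Variables (Rr : realType) (V : finType).

Definition Morse_cond_i (E : rel V) (f : V -> Rr) (s : seq V) : Prop :=
  match s with
  | [::] => True
  | x0 :: _ =>
    forall i1 i2 : nat, (i1 < size s)%N -> (i2 < size s)%N ->
      f (nth x0 s i1) = 0 -> allowed predT E (delete_at i1 s) ->
      f (nth x0 s i2) = 0 -> allowed predT E (delete_at i2 s) ->
      i1 = i2
  end.

Definition Morse_cond_ii (E : rel V) (f : V -> Rr) (s : seq V) : Prop :=
  forall u1 u2 : V,
    f u1 = 0 -> (exists k, (k <= size s)%N /\ allowed predT E (insert_at k u1 s)) ->
    f u2 = 0 -> (exists k, (k <= size s)%N /\ allowed predT E (insert_at k u2 s)) ->
    u1 = u2.

Definition discrete_Morse (E : rel V) (f : V -> Rr) : Prop :=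
  (forall v, 0 <= f v) /\
  (forall s : seq V, allowed predT E s -> Morse_cond_i E f s /\ Morse_cond_ii E f s).

Definition outdeg (E : rel V) (v : V) : nat := #|[set w | E v w]|.
Definition indeg (E : rel V) (v : V) : nat := #|[set u | E u v]|.

Definition collapse_Z (E : rel V) (f : V -> Rr) : pred V :=
  fun v => (f v == 0) && [exists u, exists w, [&& E u v, E v w & E u w]].

(* Under
   the degree hypothesis the removed edges are exactly the edges of E with an
   endpoint in Z (the u -> v with v in Z and the v -> w with v in Z). *)
Definition collapse_V (E : rel V) (f : V -> Rr) : pred V :=
  predC (collapse_Z E f).
Definition collapse_E (E : rel V) (f : V -> Rr) : rel V :=
  fun x y => E x y && ~~ ((y \in collapse_Z E f) || (x \in collapse_Z E f)).
End Morse.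

(* Main.v *)
Require Import Defs.
From mathcomp Require Import all_boot all_order all_algebra reals zify ring.
Import GRing.Theory Num.Theory.
Local Open Scope ring_scope.
Set Implicit Arguments. Unset Strict Implicit. Unset Printing Implicit Defensive.

Section SeqL.
Variable T : finType.
Lemma delete_at0 (x : T) t : delete_at 0 (x :: t) = t. Proof. by rewrite /delete_at /= drop0. Qed.
Lemma delete_atS i (x : T) t : delete_at i.+1 (x :: t) = x :: delete_at i t.
Proof. by rewrite /delete_at. Qed.
Lemma delete_at_nil i : delete_at i (@nil T) = [::]. Proof. by case: i. Qed.
Lemma nth_delete (x0 : T) i t j :
  nth x0 (delete_at i t) j = nth x0 t (if (j < i)%N then j else j.+1).
Proof.
elim: t i j => [|x t IH] i j; first by rewrite delete_at_nil !nth_nil.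
case: i => [|i]; first by rewrite delete_at0.
rewrite delete_atS; case: j => [|j] //=.
by rewrite IH ltnS; case: ifP.
Qed.
Lemma size_delete i (t : seq T) : (i < size t)%N -> size (delete_at i t) = (size t).-1.
Proof.
elim: t i => [|x t IH] [|i] // h; first by rewrite delete_at0.
by rewrite delete_atS /= IH //; move: h => /=; case: (size t).
Qed.
Lemma mem_delete i (t : seq T) x : x \in delete_at i t -> x \in t.
Proof. by rewrite /delete_at mem_cat => /orP [/mem_take|/mem_drop]. Qed.
End SeqL.

Section S.
Variables (R : comPzRingType) (Rr : realType) (V : finType) (E : rel V) (f : V -> Rr).
Hypothesis Eirr : irreflexive E.
Hypothesis deg : forall v, f v = 0 -> outdeg E v = 1%N /\ indeg E v = 1%N.
Local Notation Z := (collapse_Z E f).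

Lemma inZ v : (v \in Z) = Z v. Proof. by []. Qed.

Lemma out_uniq v y1 y2 : f v = 0 -> E v y1 -> E v y2 -> y1 = y2.
Proof.
move=> /deg [/eqP /cards1P [x hx] _] h1 h2.
have : y1 \in [set w | E v w] by rewrite inE.
have : y2 \in [set w | E v w] by rewrite inE.
by rewrite hx !in_set1 => /eqP -> /eqP ->.
Qed.
Lemma in_uniq v y1 y2 : f v = 0 -> E y1 v -> E y2 v -> y1 = y2.
Proof.
move=> /deg [_ /eqP /cards1P [x hx]] h1 h2.
have : y1 \in [set w | E w v] by rewrite inE.
have : y2 \in [set w | E w v] by rewrite inE.
by rewrite hx !in_set1 => /eqP -> /eqP ->.
Qed.
Lemma Zf v : Z v -> f v = 0. Proof. by case/andP => /eqP. Qed.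
Lemma Zwit v : Z v -> exists u w, [/\ E u v, E v w & E u w].
Proof. by case/andP => _ /existsP [u /existsP [w /and3P [*]]]; exists u, w. Qed.
Lemma Ztri v x y : Z v -> E x v -> E v y -> E x y.
Proof.
move=> hv hx hy; have [u [w [h1 h2 h3]]] := Zwit hv.
by rewrite (in_uniq (Zf hv) hx h1) (out_uniq (Zf hv) hy h2).
Qed.
Lemma Zout_notZ v y : Z v -> E v y -> ~~ Z y.
Proof.
move=> hv hy; apply/negP => hZ; have [u [w [h1 h2 h3]]] := Zwit hv.
have ew := out_uniq (Zf hv) hy h2; subst w.
have := in_uniq (Zf hZ) hy h3 => evu; subst u.
by rewrite Eirr in h1.
Qed.
Lemma Zin_notZ v x : Z v -> E x v -> ~~ Z x.
Proof.
move=> hv hx; apply/negP => hZ; have [u [w [h1 h2 h3]]] := Zwit hv.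
have eu := in_uniq (Zf hv) hx h1; subst u.
have := out_uniq (Zf hZ) hx h3 => evw; subst w.
by rewrite Eirr in h2.
Qed.
Lemma Zneq v x y : Z v -> E x v -> E v y -> x != y.
Proof. move=> hv hx hy; apply/negP => /eqP e; subst y. by have := Ztri hv hx hy; rewrite Eirr. Qed.

Lemma bd0 n : bd (0 : chain R V n.+1) = 0.
Proof.
apply/ffunP => w; rewrite !ffunE; case: ifP => // _.
by apply: big1 => t _; apply: big1 => i _; rewrite ffunE mulr0 mul0rn.
Qed.

Lemma bdB n (a b : chain R V n.+1) : bd (a - b) = bd a - bd b.
Proof.
apply/ffunP => w; rewrite !ffunE; case: ifP => _; last by rewrite subr0.
rewrite -sumrB; apply: eq_bigr => t _; rewrite -sumrB; apply: eq_bigr => i _.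
by rewrite !ffunE mulrBr mulrnBl.
Qed.

Lemma bd_supp n (c : chain R V n.+1) (s : n.+1.-tuple V) : bd c s != 0 ->
  regular s /\ exists (t : n.+2.-tuple V) (i : 'I_n.+2),
    [/\ regular t, c t != 0 & delete_at i t = s].
Proof.
rewrite ffunE; case: ifP => rs; last by rewrite eqxx.
move=> h; split => //.
have [t /and3P [rt ct /existsP [i /eqP di]]|none] :=
  pickP (fun t : n.+2.-tuple V => [&& regular t, c t != 0 &
                                  [exists i : 'I_n.+2, delete_at i t == s]]).
  by exists t, i.
move: h; rewrite big1 ?eqxx // => t rt; apply: big1 => i _.
have [->|ct] := eqVneq (c t) 0; first by rewrite mulr0 mul0rn.
case: eqP => [di|_]; last by rewrite mulr0n.
by have := none t; rewrite /= rt ct /= => /negbT/existsPn/(_ i); rewrite di eqxx.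
Qed.

Lemma bd_eval1 n (c : chain R V n.+1) (s : n.+1.-tuple V) (t0 : n.+2.-tuple V)
  (j : 'I_n.+2) : regular s -> regular t0 -> delete_at j t0 = s ->
  (forall (t : n.+2.-tuple V) (i : 'I_n.+2), regular t -> c t != 0 ->
      delete_at i t = s -> t = t0 /\ i = j) ->
  bd c s = (-1) ^+ j * c t0.
Proof.
move=> rs rt0 dj H; rewrite ffunE rs (bigD1 t0) //= [X in _ + X]big1 ?addr0.
  rewrite (bigD1 j) //= dj eqxx mulr1n big1 ?addr0 // => i ij.
  have [->|ct] := eqVneq (c t0) 0; first by rewrite mulr0 mul0rn.
  by case: eqP => // di; have [_ eij] := H _ _ rt0 ct di; rewrite eij eqxx in ij.
move=> t /andP [rt tt0]; apply: big1 => i _.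
have [->|ct] := eqVneq (c t) 0; first by rewrite mulr0 mul0rn.
by case: eqP => // di; have [et _] := H _ _ rt ct di; rewrite et eqxx in tt0.
Qed.

Lemma bd_eval2 n (c : chain R V n.+1) (s : n.+1.-tuple V) (t0 t1 : n.+2.-tuple V)
  (j0 j1 : 'I_n.+2) : regular s -> regular t0 -> regular t1 -> t0 != t1 ->
  delete_at j0 t0 = s -> delete_at j1 t1 = s ->
  (forall (t : n.+2.-tuple V) (i : 'I_n.+2), regular t -> c t != 0 ->
      delete_at i t = s -> (t = t0 /\ i = j0) \/ (t = t1 /\ i = j1)) ->
  bd c s = (-1) ^+ j0 * c t0 + (-1) ^+ j1 * c t1.
Proof.
move=> rs rt0 rt1 n01 dj0 dj1 H; rewrite ffunE rs (bigD1 t0) //= (bigD1 t1) /=;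
  last by rewrite rt1 eq_sym.
rewrite [X in _ + (_ + X)]big1 ?addr0; last first.
  move=> t /andP [/andP [rt tt0] tt1]; apply: big1 => i _.
  have [->|ct] := eqVneq (c t) 0; first by rewrite mulr0 mul0rn.
  case: eqP => // di; have [[et _]|[et _]] := H _ _ rt ct di.
    by rewrite et eqxx in tt0.
  by rewrite et eqxx in tt1.
congr (_ + _).
  rewrite (bigD1 j0) //= dj0 eqxx mulr1n big1 ?addr0 // => i ij.
  have [->|ct] := eqVneq (c t0) 0; first by rewrite mulr0 mul0rn.
  case: eqP => // di; have [[_ eij]|[et _]] := H _ _ rt0 ct di.
    by rewrite eij eqxx in ij.
  by rewrite et eqxx in n01.
rewrite (bigD1 j1) //= dj1 eqxx mulr1n big1 ?addr0 // => i ij.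
have [->|ct] := eqVneq (c t1) 0; first by rewrite mulr0 mul0rn.
case: eqP => // di; have [[et _]|[_ eij]] := H _ _ rt1 ct di.
  by rewrite et eqxx in n01.
by rewrite eij eqxx in ij.
Qed.

Lemma allowed_sorted (s : seq V) : allowed predT E s -> sorted E s.
Proof. by case/and3P. Qed.

Lemma sorted_regular (s : seq V) : sorted E s -> regular s.
Proof. apply: sub_sorted => x y exy; apply/eqP => e; subst y; by rewrite Eirr in exy. Qed.

Lemma uniq_pre (x0 : V) (t t' : seq V) (i j : nat) :
  size t' = size t -> (i < size t')%N -> (0 < j)%N -> (j.+1 < size t)%N ->
  delete_at i t' = delete_at j t -> sorted E t' ->
  ~~ E (nth x0 t j.-1) (nth x0 t j.+1) ->
  (forall y, E (nth x0 t j.-1) y -> E y (nth x0 t j.+1) -> y = nth x0 t j) ->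
  i = j /\ t' = t.
Proof.
move=> st ilt j0 jlt dd /(sortedP x0) srt nE uq.
have hs m : nth x0 t' (if (m < i)%N then m else m.+1) =
            nth x0 t (if (m < j)%N then m else m.+1).
  by rewrite -!nth_delete dd.
have pj : j.-1.+1 = j by rewrite prednK.
have [ltij|ltji|eqij] := ltngtP i j.
- have h1 := hs j.-1; have h2 := hs j.
  rewrite (_ : (j.-1 < i)%N = false) ?pj in h1; last by lia.
  rewrite ltnn (_ : (j < i)%N = false) in h1 h2; last by lia.
  rewrite leqnn in h1.
  by case/negP: nE; rewrite -h1 -h2; apply: srt; rewrite st.
- have h1 := hs j.-1; have h2 := hs j.
  rewrite (_ : (j.-1 < i)%N) in h1; last by lia.
  rewrite (_ : (j.-1 < j)%N) in h1; last by lia.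
  rewrite ltji ltnn in h2.
  case/negP: nE; rewrite -h1 -h2; have := srt j.-1; rewrite pj; apply; lia.
subst i; split => //; apply: (eq_from_nth (x0 := x0) st) => m mlt.
have [ltmj|ltjm|eqmj] := ltngtP m j.
- by have := hs m; rewrite ltmj.
- case: m ltjm mlt => // m ltjm mlt; have := hs m.
  by rewrite ltnNge (_ : (j <= m)%N) //= ltnNge (_ : (j <= m)%N).
subst m; apply: uq.
  have := hs j.-1; rewrite (_ : (j.-1 < j)%N); last by lia.
  move=> <-; have := srt j.-1; rewrite pj; apply; lia.
have := hs j; rewrite ltnn => <-; apply: srt; by rewrite st.
Qed.

Lemma regular_delete (x0 : V) (t : seq V) j : regular t -> (0 < j)%N -> (j.+1 < size t)%N ->
  nth x0 t j.-1 != nth x0 t j.+1 -> regular (delete_at j t).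
Proof.
move=> /(sortedP x0) rt j0 jlt nq; apply/(sortedP x0) => m.
rewrite size_delete; last exact: ltnW.
move=> mlt; rewrite !nth_delete.
case: ifP => a; case: ifP => b.
- apply: rt; lia.
- have hm2 : m.+2 = j.+1 by lia.
  have hm : m = j.-1 by lia.
  by rewrite hm2 hm.
- lia.
- apply: rt; lia.
Qed.

Lemma kill_at n (c : chain R V n.+1) (t : n.+2.-tuple V) (j : nat) (x0 : V) :
  inP predT E c -> inP predT E (bd c) -> c t != 0 -> (0 < j)%N -> (j.+1 < n.+2)%N ->
  ~~ E (nth x0 t j.-1) (nth x0 t j.+1) -> nth x0 t j.-1 != nth x0 t j.+1 ->
  (forall y, E (nth x0 t j.-1) y -> E y (nth x0 t j.+1) -> y = nth x0 t j) -> False.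
Proof.
move=> Pc Pbd ct j0 jlt nE nq uq.
have st := allowed_sorted (Pc _ ct).
have rt := sorted_regular st.
have jlt' : (j < n.+2)%N by apply: ltnW.
have ss : size (delete_at j t) == n.+1 by rewrite size_delete ?size_tuple.
pose s := Tuple ss.
have rs : regular s by apply: (regular_delete (x0 := x0)) => //; rewrite size_tuple.
have e := @bd_eval1 n c s t (Ordinal jlt') rs rt erefl.
have {}e : bd c s = (-1) ^+ j * c t.
  apply: e => t' i rt' ct' di.
  have st' := allowed_sorted (Pc _ ct').
  have h1 : size t' = size t by rewrite !size_tuple.
  have h2 : (i < size t')%N by rewrite size_tuple.
  have h3 : (j.+1 < size t)%N by rewrite size_tuple.
  have [eij et] := @uniq_pre x0 t t' i j h1 h2 j0 h3 di st' nE uq.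
  by split; apply: val_inj.
have : bd c s != 0.
  apply/negP => /eqP h; move: e; rewrite h => /(congr1 ( *%R ((-1) ^+ j))).
  by rewrite signrMK mulr0 => /esym/eqP; rewrite (negbTE ct).
move=> /Pbd /allowed_sorted /(sortedP x0) /(_ j.-1).
rewrite size_tuple !nth_delete (_ : (j.-1 < j)%N); last by lia.
have pj : j.-1.+1 = j by lia.
rewrite pj ltnn.
by move=> h; case/negP: nE; apply: h; lia.
Qed.

Lemma kill n (c : chain R V n.+1) : inP predT E c -> inP predT E (bd c) ->
  forall (t : n.+2.-tuple V) v, c t != 0 -> Z v -> v \in (t : seq V) ->
  (index v t = 0 /\ n = 0)%N \/ (index v t = 1 /\ n <= 1)%N.
Proof.
move=> Pc Pbd t v ct zv vt.
have st := allowed_sorted (Pc _ ct).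
have /(sortedP v) srt := st.
have kv := nth_index v vt.
have klt : (index v t < n.+2)%N by move: (index_mem v t); rewrite vt size_tuple.
set k := index v t in kv klt *.
have srt' m : (m.+1 < n.+2)%N -> E (nth v t m) (nth v t m.+1).
  by move=> h; apply: srt; rewrite size_tuple.
have [k2|k1] := leqP 2 k.
  have pk : k.-1.+1 = k by lia.
  have pk2 : k.-1.-1 = k.-2 by lia.
  have exu : E (nth v t k.-2) (nth v t k.-1).
    have := srt' k.-2; rewrite (_ : k.-2.+1 = k.-1); last by lia.
    apply; lia.
  have euv : E (nth v t k.-1) v by have := srt' k.-1; rewrite pk kv; apply; lia.
  exfalso; apply: (@kill_at n c t k.-1 v Pc Pbd ct); rewrite ?pk ?pk2 ?kv.
  - lia.
  - lia.
  - apply/negP => h.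
    have := in_uniq (Zf zv) h euv => e; rewrite e in exu.
    by rewrite Eirr in exu.
  - apply/eqP => h; rewrite h in exu.
    by have := Ztri zv euv exu; rewrite Eirr.
  move=> y h1 h2; exact: (in_uniq (Zf zv) h2 euv).
have [kn|kn] := ltnP k.+2 n.+2; last by case: k k1 kn {kv klt} => [|[|]] //; lia.
have evw : E v (nth v t k.+1) by rewrite -{1}kv srt'; lia.
have ewy : E (nth v t k.+1) (nth v t k.+2) by rewrite srt'.
exfalso; apply: (@kill_at n c t k.+1 v Pc Pbd ct) => //=; rewrite ?kv.
- apply/negP => h.
  by rewrite -(out_uniq (Zf zv) evw h) Eirr in ewy.
- apply/eqP => h.
  by rewrite -h in ewy; have := Ztri zv ewy evw; rewrite Eirr.
move=> y h1 h2; exact: (out_uniq (Zf zv) h1 evw).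
Qed.

Definition avoidZ (s : seq V) := all (fun x => ~~ Z x) s.
Definition cavoid n (c : chain R V n) := forall t, c t != 0 -> avoidZ t.
Local Notation GV := (collapse_V E f).
Local Notation GE := (collapse_E E f).

Lemma allowedT (s : seq V) : allowed predT E s -> avoidZ s -> allowed GV GE s.
Proof.
case/and3P => h0 _ hs av; apply/and3P; split => //.
case: s h0 hs av => [//|x0 s] _ hs av.
apply/(sortedP x0) => i hi; rewrite /collapse_E (sortedP x0 hs) //=.
have m1 : nth x0 (x0 :: s) i \in x0 :: s by rewrite mem_nth // ltnW.
have m2 : nth x0 (x0 :: s) i.+1 \in x0 :: s by rewrite mem_nth.
move: (allP av _ m1) (allP av _ m2) => /= /negbTE h1 /negbTE h2; by rewrite !inZ h1 h2.
Qed.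

Lemma allowed1 (x : V) : allowed predT E [:: x]. Proof. by []. Qed.

Lemma avoid_bd n (c : chain R V n.+1) (s : n.+1.-tuple V) : cavoid c -> bd c s != 0 -> avoidZ s.
Proof.
move=> av /bd_supp [_ [t [i [_ ct di]]]].
apply/allP => x xs; apply: (allP (av _ ct)); apply: (mem_delete (i := i)); by rewrite di.
Qed.

Lemma transfer n (c : chain R V n.+1) : inOmega predT E c -> cavoid c -> inOmega GV GE c.
Proof.
move=> [Pc Pbd] av; split => t ct; first exact: allowedT (Pc _ ct) (av _ ct).
exact: allowedT (Pbd _ ct) (avoid_bd av ct).
Qed.

Lemma transfer0 (c : chain R V 0) : cavoid c -> inOmega GV GE c.
Proof.
move=> av; split => t ct.
  case: t ct => [[|x []] //= ht] ct; apply: allowedT => //; exact: (av _ ct).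
by move: ct; rewrite /= ffunE eqxx.
Qed.

Lemma omega_high n (c : chain R V n.+3) : inOmega predT E c -> inOmega GV GE c.
Proof.
move=> [Pc Pbd]; apply: transfer => //.
move=> t ct; apply/allP => x xt; apply/negP => zx.
by have [[_ //]|[_ //]] := kill Pc Pbd ct zx xt.
Qed.

Lemma tup1 (t : 1.-tuple V) : exists p, t = [tuple p].
Proof. by case: t => [[|p []] //= h]; exists p; apply: val_inj. Qed.
Lemma tup2 (t : 2.-tuple V) : exists p q, t = [tuple p; q].
Proof. by case: t => [[|p [|q []]] //= h]; exists p, q; apply: val_inj. Qed.
Lemma tup3 (t : 3.-tuple V) : exists p q r, t = [tuple p; q; r].
Proof. by case: t => [[|p [|q [|r []]]] //= h]; exists p, q, r; apply: val_inj. Qed.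

Lemma neqE x y : E x y -> x != y.
Proof. by move=> h; apply/eqP => e; subst y; rewrite Eirr in h. Qed.

Lemma omega2_avoid (c : chain R V 2) : inOmega predT E c ->
  (forall a v, Z v -> E a v -> bd c [tuple a; v] = 0) -> cavoid c.
Proof.
move=> [Pc Pbd] H t ct; apply/allP => x xt; apply/negP => zx.
have [[_ //]|[k1 _]] := kill Pc Pbd ct zx xt.
have [p [q [r et]]] := tup3 t; subst t.
have := nth_index x xt; rewrite k1 /= => eq; subst x.
have /= /and3P [epq eqr _] := allowed_sorted (Pc _ ct).
have := H p q zx epq.
have -> : bd c [tuple p; q] = (-1) ^+ 2 * c [tuple p; q; r].
  apply: (@bd_eval1 1 c [tuple p; q] [tuple p; q; r] ord_max).
  - by rewrite /regular /= neqE.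
  - by rewrite /regular /= !neqE.
  - by [].
  move=> t' i rt' ct' di.
  have [p' [q' [r' et']]] := tup3 t'; subst t'.
  have qt' : q \in ([tuple p'; q'; r'] : seq V).
    by apply: (mem_delete (i := i)); rewrite di !inE eqxx orbT.
  have [[_ //]|[k1' _]] := kill Pc Pbd ct' zx qt'.
  have := nth_index q qt'; rewrite k1' /= => eq; subst q'.
  move: rt'; rewrite /regular /= => /and3P [_ nqr _].
  case: i di => [[|[|[|//]]] hi] /=; rewrite /delete_at /=.
  - by case=> _ e; rewrite e eqxx in nqr.
  - by case=> _ e; rewrite e eqxx in nqr.
  case=> e1; subst p'.
  have /= /and3P [_ eqr' _] := allowed_sorted (Pc _ ct').
  by rewrite (out_uniq (Zf zx) eqr' eqr); split => //; apply: val_inj.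
by rewrite expr2 mulN1r opprK mul1r => /eqP; rewrite (negbTE ct).
Qed.

Lemma collapse m (x : seq V) (K : R) :
  \sum_(t' : m.-tuple V | regular t') K *+ (x == val t') =
  if (size x == m) && regular x then K else 0.
Proof.
case: (boolP (size x == m)) => hx /=; last first.
  apply: big1 => t' _; case: eqP => // e; by rewrite e size_tuple eqxx in hx.
case rx: (regular x).
  rewrite (bigD1 (Tuple hx)) //= eqxx mulr1n big1 ?addr0 // => t' /andP [_ ne].
  case: eqP => // e; case/negP: ne; apply/eqP; exact: val_inj.
apply: big1 => t' rt'; case: eqP => // e; by rewrite e rt' in rx.
Qed.

Lemma termE (j i : nat) (t t' s : seq V) (k : R) :
  ((-1) ^+ j * (k *+ (delete_at i t == t'))) *+ (delete_at j t' == s) =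
  (((-1) ^+ j * k) *+ (delete_at j (delete_at i t) == s)) *+ (delete_at i t == t').
Proof. by case: eqP => [->|_]; rewrite ?mulr0n ?mulr0 ?mul0rn ?mulr1n. Qed.

Lemma bdbd2 (c : chain R V 2) : (forall t, c t != 0 -> uniq t) -> bd (bd c) = 0.
Proof.
move=> Hu; apply/ffunP => s; rewrite !ffunE; case: ifP => rs //.
under eq_bigr => t' rt' do under eq_bigr => j _ do
  rewrite ffunE rt' big_distrr -sumrMnl.
under eq_bigr => t' rt' do under eq_bigr => j _ do under eq_bigr => t _ do
  rewrite big_distrr -sumrMnl.
under eq_bigr => t' rt' do under eq_bigr => j _ do under eq_bigr => t _ do
  under eq_bigr => i _ do rewrite termE.
under eq_bigr => t' rt' do rewrite exchange_big.
rewrite exchange_big; apply: big1 => t rt.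
rewrite exchange_big.
under eq_bigr => j _ do rewrite exchange_big.
under eq_bigr => j _ do under eq_bigr => i _ do rewrite collapse.
have [->|ct] := eqVneq (c t) 0.
  by apply: big1 => j _; apply: big1 => i _; case: ifP; rewrite ?mulr0 ?mul0rn.
have [a [b [d et]]] := tup3 t; subst t.
have /= := Hu _ ct; rewrite !inE negb_or => /andP [/andP [nab nad] /andP [nbd _]].
rewrite !big_ord_recr !big_ord0 /= !add0r.
rewrite /delete_at /= /regular /= nab nad nbd /=.
have [s1 es] := tup1 s; subst s.
rewrite /=.
set X := c _.
rewrite !expr0 !expr1 !mul1r.
case: (a == s1); case: (b == s1); case: (d == s1); rewrite /= ?mulr0n ?mulr1n;
  rewrite ?mulN1r ?mulrN1 ?opprK ?expr2 ?mulN1r ?opprK ?mul1r; 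
  rewrite ?addrA ?addrN ?subrr ?addr0 ?add0r; try ring.
Qed.

Definition Wzf (c : chain R V 1) (t : 3.-tuple V) : R :=
  if val t is [:: x; y; z] then
     (if Z y && E x y then c [tuple y; z] else 0) else 0.
Definition Wz (c : chain R V 1) : chain R V 2 := finfun (Wzf c).
Definition W0f (c : chain R V 0) (t : 2.-tuple V) : R :=
  if val t is [:: x; y] then
     (if Z y && E x y then c [tuple y] else 0) else 0.
Definition W0 (c : chain R V 0) : chain R V 1 := finfun (W0f c).

Lemma inP0 (Vs : pred V) (E' : rel V) n : inP Vs E' (0 : chain R V n).
Proof. by move=> t; rewrite ffunE eqxx. Qed.

Lemma subE n (a b : chain R V n) t : (a - b) t = a t - b t.
Proof. by rewrite !ffunE. Qed.

Lemma Wz_supp (c : chain R V 1) : inP predT E c -> forall t, Wz c t != 0 ->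
  exists x y z, t = [tuple x; y; z] /\ [/\ Z y, E x y, E y z & c [tuple y; z] != 0].
Proof.
move=> Pc t; have [x [y [z ->]]] := tup3 t; rewrite ffunE /Wzf /=.
case: ifP => [/andP [zy exy] cn|]; last by rewrite eqxx.
have /= /andP [eyz _] := allowed_sorted (Pc _ cn).
by exists x, y, z.
Qed.

Lemma step1 (c : chain R V 1) : inOmega predT E c ->
  (forall b, Z b -> bd c [tuple b] = 0) ->
  [/\ inOmega predT E (Wz c), inP GV GE (c - bd (Wz c)) & bd (bd (Wz c)) = 0].
Proof.
move=> [Pc Pbc] Hb.
have WS := Wz_supp Pc.
have PW : inOmega predT E (Wz c).
  split.
    move=> t /WS [x [y [z [-> [zy exy eyz _]]]]].
    by rewrite /allowed /= exy eyz.
  move=> s /bd_supp [_ [t [i [_ /WS [x [y [z [et [zy exy eyz _]]]]] di]]]].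
  subst t; have exz := Ztri zy exy eyz.
  have [a [b es]] := tup2 s; subst s.
  move: di; case: i => [[|[|[|//]]] hi] /=; rewrite /delete_at /= => -[<- <-];
    by rewrite /allowed /= ?exy ?eyz ?exz.
have Wval x y z : Wz c [tuple x; y; z] = if Z y && E x y then c [tuple y; z] else 0.
  by rewrite ffunE.
split => //.
- move=> s; rewrite subE => ns.
  have [a [b es]] := tup2 s; subst s.
  have eab : E a b.
    have [h|h] : (c [tuple a; b] != 0) \/ (bd (Wz c) [tuple a; b] != 0).
      case: (eqVneq (c [tuple a; b]) 0) => h; last by left.
      by right; apply: contraNneq ns => ->; rewrite h subrr.
      by move: (Pc _ h); rewrite /allowed /= => /andP [].
    by move: (PW.2 _ h); rewrite /allowed /= => /andP [].
  apply: allowedT; first by rewrite /allowed /= eab.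
  rewrite /avoidZ /= andbT; apply/andP; split; apply/negP => za.
  +
    have [u [w [eua _ _]]] := Zwit za.
    have zb : ~~ Z b := Zout_notZ za eab.
    have : bd (Wz c) [tuple a; b] = (-1) ^+ 0 * Wz c [tuple u; a; b].
      apply: (@bd_eval1 1 _ _ _ ord0).
      - by rewrite /regular /= neqE.
      - by rewrite /regular /= !neqE.
      - by [].
      move=> t' i _ /WS [x [y [z [-> [zy exy eyz _]]]]].
      case: i => [[|[|[|//]]] hi] /=; rewrite /delete_at /=.
      + case=> e1 e2; subst y z; rewrite (in_uniq (Zf za) exy eua).
        by split => //; apply: val_inj.
      + by case=> e1 e2; subst x z; move: (Zin_notZ zy exy); rewrite za.
      + by case=> e1 e2; subst x y; move: zb; rewrite zy.
    rewrite Wval za eua expr0 mul1r => h.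
    by move: ns; rewrite h subrr eqxx.
  +
    have [u [w [_ ebw _]]] := Zwit za.
    have : bd (Wz c) [tuple a; b] = (-1) ^+ 2 * Wz c [tuple a; b; w].
      apply: (@bd_eval1 1 _ _ _ ord_max).
      - by rewrite /regular /= neqE.
      - by rewrite /regular /= !neqE ?(Zneq za eab ebw).
      - by [].
      move=> t' i _ /WS [x [y [z [-> [zy exy eyz _]]]]].
      case: i => [[|[|[|//]]] hi] /=; rewrite /delete_at /=.
      + by case=> e1 e2; subst y z; move: (Zout_notZ zy eyz); rewrite za.
      + by case=> e1 e2; subst x z; move: (Zout_notZ zy eyz); rewrite za.
      + case=> e1 e2; subst x y; rewrite (out_uniq (Zf za) eyz ebw).
        by split => //; apply: val_inj.
    rewrite Wval za eab expr2 mulN1r opprK mul1r => h.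
    have hb := Hb b za.
    have : bd c [tuple b] = (-1) ^+ 0 * c [tuple a; b] + (-1) ^+ 1 * c [tuple b; w].
      apply: (@bd_eval2 0 _ _ _ _ ord0 ord_max).
      - by [].
      - by rewrite /regular /= neqE.
      - by rewrite /regular /= neqE.
      - by apply/negP => /eqP /(congr1 val) /= [e1 _]; move: (neqE eab); rewrite e1 eqxx.
      - by [].
      - by [].
      move=> t' i _ ct'.
      have [x [y et']] := tup2 t'; subst t'.
      have /= /andP [exy _] := allowed_sorted (Pc _ ct').
      case: i => [[|[|//]] hi] /=; rewrite /delete_at /=.
      + case=> e1; subst y; left; rewrite (in_uniq (Zf za) exy eab).
        by split => //; apply: val_inj.
      + case=> e1; subst x; right; rewrite (out_uniq (Zf za) exy ebw).
        by split => //; apply: val_inj.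
    rewrite hb expr0 expr1 mul1r mulN1r => /eqP; rewrite eq_sym subr_eq0 => /eqP e.
    by move: ns; rewrite h e subrr eqxx.
- apply: bdbd2 => t /WS [x [y [z [-> [zy exy eyz _]]]]].
  by rewrite /= !inE !negb_or (neqE exy) (neqE eyz) (Zneq zy exy eyz).
Qed.

Lemma main n : inclusion_iso_Hn R GV GE predT E n.
Proof.
case: n => [|[|[|n]]]; split.
- move=> z Oz _; exists (z - bd (W0 z)), (W0 z); split.
  + apply: transfer0 => t; have [a ->] := tup1 t; rewrite subE => nz.
    rewrite /avoidZ /= andbT; apply/negP => za.
    have [u [w [eua _ _]]] := Zwit za.
    have : bd (W0 z) [tuple a] = (-1) ^+ 0 * W0 z [tuple u; a].
      apply: (@bd_eval1 0 _ _ _ ord0) => //.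
      - by rewrite /regular /= neqE.
      move=> t' i _; have [x [y ->]] := tup2 t'; rewrite ffunE /W0f /=.
      case: ifP => [/andP [zy exy] _|]; last by rewrite eqxx.
      case: i => [[|[|//]] hi] /=; rewrite /delete_at /=.
      + case=> e1; subst y; rewrite (in_uniq (Zf za) exy eua).
        by split => //; apply: val_inj.
      + by case=> e1; subst x; move: (Zin_notZ zy exy); rewrite za.
    rewrite [X in _ * X]ffunE /W0f /= za eua expr0 mul1r => h.
    by move: nz; rewrite h subrr eqxx.
  + by [].
  + split.
      move=> t; have [x [y ->]] := tup2 t; rewrite ffunE /W0f /=.
      case: ifP => [/andP [zy exy] _|]; last by rewrite eqxx.
      by rewrite /allowed /= exy.
    by move=> t _; have [x ->] := tup1 t; rewrite /allowed /=.
  + by rewrite subrK.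
- move=> z' w Oz' _ Ow e.
  have Hb b : Z b -> bd w [tuple b] = 0.
    move=> zb; case: (eqVneq (bd w [tuple b]) 0) => // nz; exfalso.
    have : z' [tuple b] != 0 by rewrite e.
    by move/(Oz'.1); rewrite /allowed /= /collapse_V /= zb.
  have [PW PP BB] := step1 Ow Hb.
  exists (w - bd (Wz w)); split; last by rewrite bdB BB subr0.
  split => //; rewrite /= bdB BB subr0 -e; exact: Oz'.1.
- move=> z Oz bz.
  have bz' : bd z = 0 by [].
  have Hb : forall b, Z b -> bd z [tuple b] = 0 by move=> b _; rewrite bz' ffunE.
  have [PW PP BB] := step1 Oz Hb.
  exists (z - bd (Wz z)), (Wz z); split => //.
  + split => //; rewrite /= bdB BB bz' subr0; exact: inP0.
  + by rewrite /= bdB BB bz' subr0.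
  + by rewrite subrK.
- move=> z' w Oz' _ Ow e; exists w; split => //.
  apply: transfer => //; apply: omega2_avoid => // a v zv eav.
  case: (eqVneq (bd w [tuple a; v]) 0) => // nz; exfalso.
  have : z' [tuple a; v] != 0 by rewrite e.
  by move/(Oz'.1); rewrite /allowed /= /collapse_V /= zv !andbF.
- move=> z Oz bz; have bz' : bd z = 0 by [].
  exists z, 0; split => //.
  + apply: transfer => //; apply: omega2_avoid => // a v _ _; by rewrite bz' ffunE.
  + by split; [exact: inP0 | rewrite /= bd0; exact: inP0].
  + by rewrite bd0 addr0.
- move=> z' w _ _ Ow e; exists w; split => //; exact: omega_high.
- move=> z Oz bz; exists z, 0; split => //.
  + exact: omega_high.
  + by split; [exact: inP0 | rewrite /= bd0; exact: inP0].
  + by rewrite bd0 addr0.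
- move=> z' w _ _ Ow e; exists w; split => //; exact: omega_high.
Qed.
End S.

Unset Implicit Arguments.

Theorem theorem1p2 (R : comPzRingType) (Rr : realType) (V : finType)
    (E : rel V) (f : V -> Rr) :
  irreflexive E ->
  discrete_Morse E f ->
  (forall v, f v = 0 -> outdeg E v = 1%N /\ indeg E v = 1%N) ->
  forall n : nat,
    inclusion_iso_Hn R (collapse_V E f) (collapse_E E f) predT E n.
Proof. by move=> Eirr _ deg n; apply: main. Qed.
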